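(* Let $\Omega$ be a finite ground set, let $(\Omega,\mathcal{I})$ be a matroid, let $f:2^\Omega\to\mathbb{R}$ be a normalized, monotone, submodular set function with $f(\{x\})>0$ for every $x\in\Omega$, and let $\nu$ be the curvature of $f$. Fix an integer $\alpha\ge 0$. Let $A^{\mathrm{sol}}$ be any output of the Myopic Maximization algorithm below (with arbitrary tie-breaking). Then $A^{\mathrm{sol}}\in\mathcal{I}$, and \[ \min_{B\subseteq A^{\mathrm{sol}},\ |B|\le\alpha} f(A^{\mathrm{sol}}\setminus B)\;\ge\;(1-\nu)\,\max_{A\in\mathcal{I}}\ \min_{B\subseteq A,\ |B|\le\alpha} f(A\setminus B). \]
   Context: A set function $f$ is normalized if $f(\emptyset)=0$, monotone if $f(X)\le f(Y)$ whenever $X\subseteq Y$, and submodular if $f(X\cup\{x\})-f(X)\ge f(Y\cup\{x\})-f(Y)$ for all $X\subseteq Y\subseteq\Omega$ and $x\in\Omega\setminus Y$. Write $f(x)$ for $f(\{x\})$. The curvature of $f$ is \[ \nu = 1-\min_{x\in\Omega}\frac{f(\Omega)-f(\Omega\setminus\{x\})}{f(x)}. \] The resilient submodular maximization problem is $\max_{A\in\mathcal{I}}\min_{B\subseteq A,\,|B|\le\alpha} f(A\setminus B)$. $\mathrm{rank}(\mathcal{I})$ denotes the common cardinality of the maximal independent sets (bases) of the matroid. Myopic Maximization algorithm: start with $A^{\mathrm{sol}}=\emptyset$; while $|A^{\mathrm{sol}}|<\mathrm{rank}(\mathcal{I})$, choose $a\in\arg\max\{ f(\{a\}) : a\in\Omega\setminus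 A^{\mathrm{sol}},\ A^{\mathrm{sol}}\cup\{a\}\in\mathcal{I}\}$ and set $A^{\mathrm{sol}}\gets A^{\mathrm{sol}}\cup\{a\}$; return $A^{\mathrm{sol}}$. *)

(* Defs.v *)
From mathcomp Require Import all_boot all_order all_algebra.
Set Implicit Arguments. Unset Strict Implicit. Unset Printing Implicit Defensive.
Import Order.TTheory GRing.Theory Num.Theory.
Local Open Scope ring_scope.

Section Defs.
Variables (T : finType) (R : realFieldType).

Definition is_matroid (I : {set T} -> bool) : Prop :=
  [/\ I set0,
      (forall A B : {set T}, B \subset A -> I A -> I B) &
      (forall A B : {set T}, I A -> I B -> (#|A| < #|B|)%N ->
         exists2 x, x \in B :\: A & I (x |: A))].

Definition mrank (I : {set T} -> bool) : nat := (\max_(A | I A) #|A|)%N.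

Definition normalized (f : {set T} -> R) : Prop := f set0 = 0.
Definition monotone (f : {set T} -> R) : Prop :=
  forall X Y : {set T}, X \subset Y -> f X <= f Y.
Definition submodular (f : {set T} -> R) : Prop :=
  forall (X Y : {set T}) (x : T), X \subset Y -> x \notin Y ->
    f (x |: X) - f X >= f (x |: Y) - f Y.

(* The neutral element 1 of the min is irrelevant whenever T is nonempty,
   since each ratio is <= 1 for normalized submodular f with f(x) > 0. *)
Definition curvature (f : {set T} -> R) : R :=
  1 - \big[Num.min/1]_(x : T) ((f setT - f (setT :\ x)) / f [set x]).

(* min_{B subset A, |B| <= alpha} f(A \ B).  B = set0 is always in range,
   so the neutral element f A is harmless. *)
Definition resil_value (f : {set T} -> R) (alpha : nat) (A : {set T}) : R :=
  \big[Num.min/f A]_(B : {set T} | (B \subset A) && (#|B| <= alpha)%N) f (A :\: B).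

(* max_{A in I} resil_value A.  set0 is independent, so the neutral element
   resil_value set0 is harmless. *)
Definition resil_opt (I : {set T} -> bool) (f : {set T} -> R) (alpha : nat) : R :=
  \big[Num.max/resil_value f alpha set0]_(A : {set T} | I A) resil_value f alpha A.

(* States reachable by the Myopic Maximization loop, with arbitrary tie-breaking. *)
Inductive myopic_reach (I : {set T} -> bool) (f : {set T} -> R) : {set T} -> Prop :=
| myopic_start : myopic_reach I f set0
| myopic_step (A : {set T}) (a : T) :
    myopic_reach I f A ->
    (#|A| < mrank I)%N ->
    a \notin A -> I (a |: A) ->
    (forall b : T, b \notin A -> I (b |: A) -> f [set b] <= f [set a]) ->
    myopic_reach I f (a |: A).

Definition myopic_output (I : {set T} -> bool) (f : {set T} -> R) (A : {set T}) : Prop :=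
  myopic_reach I f A /\ ~~ (#|A| < mrank I)%N.

End Defs.

(* Main.v *)
Require Import Defs.
From mathcomp Require Import all_boot all_order all_algebra.
From mathcomp Require Import lra.
Import Order.TTheory GRing.Theory Num.Theory.
Local Open Scope ring_scope.

Section Helpers.
Variables (T : finType) (R : realFieldType).

Lemma exists_max (w : T -> R) (A : {set T}) : A != set0 ->
  exists2 x, x \in A & forall z, z \in A -> w z <= w x.
Proof.
move: {2}#|A| (erefl #|A|) => n; elim: n A => [|n IH] A hA hA0.
  by move/eqP: hA; rewrite cards_eq0 (negbTE hA0).
have [a aA] := set0Pn _ hA0.
case: (boolP (A :\ a == set0)) => [/eqP E|ne].
  exists a => // z zA; case: (eqVneq z a) => [->//|za].
  have : z \in A :\ a by rewrite in_setD1 za zA.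
  by rewrite E inE.
have hc : #|A :\ a| = n by move: hA; rewrite (cardsD1 a) aA add1n => -[].
have [x xA xm] := IH _ hc ne.
have xA' : x \in A by move: xA; rewrite in_setD1 => /andP[].
case: (leP (w a) (w x)) => h.
  exists x => // z zA; case: (eqVneq z a) => [->//|za].
  by apply: xm; rewrite in_setD1 za zA.
exists a => // z zA; case: (eqVneq z a) => [->//|za].
apply: le_trans (ltW h); by apply: xm; rewrite in_setD1 za zA.
Qed.

Definition U (w : T -> R) (t : R) (A : {set T}) := [set x in A | t <= w x].

Lemma counting (w : T -> R) : (forall x, 0 <= w x) ->
  forall n (A S : {set T}), #|A| = n ->
  (forall t, (#|U w t A| <= #|U w t S|)%N) ->
  forall B : {set T}, exists2 B' : {set T}, B' \subset A &
    (#|B'| <= #|B|)%N /\ \sum_(x in A :\: B') w x <= \sum_(x in S :\: B) w x.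
Proof.
move=> w0; elim=> [|n IH] A S hA hU B.
  move/eqP: hA; rewrite cards_eq0 => /eqP ->.
  exists set0; first exact: sub0set.
  by rewrite cards0; split => //; rewrite set0D big_set0 sumr_ge0.
have hA0 : A != set0 by rewrite -card_gt0 hA.
have [x xA xm] := exists_max w A hA0.
have : (0 < #|U w (w x) S|)%N.
  apply: leq_trans (hU (w x)); rewrite card_gt0; apply/set0Pn; exists x.
  by rewrite inE xA lexx.
rewrite card_gt0 => /set0Pn [y]; rewrite inE => /andP[yS wxy].
have hc : #|A :\ x| = n by move: hA; rewrite (cardsD1 x) xA add1n => -[].
have hU' : forall t, (#|U w t (A :\ x)| <= #|U w t (S :\ y)|)%N.
  move=> t; case: (leP t (w x)) => ht.
    have e1 : U w t (A :\ x) = U w t A :\ x.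
      by apply/setP => z; rewrite !inE andbA.
    have e2 : U w t (S :\ y) = U w t S :\ y.
      by apply/setP => z; rewrite !inE andbA.
    rewrite e1 e2.
    move: (hU t); rewrite (cardsD1 x (U w t A)) (cardsD1 y (U w t S)).
    by rewrite !inE xA yS ht (le_trans ht wxy).
  suff -> : U w t (A :\ x) = set0 by rewrite cards0.
  apply/setP => z; rewrite !inE; apply/negP => /andP[/andP[_ zA] hz].
  by have := lt_le_trans ht (le_trans hz (xm z zA)); rewrite ltxx.
have [B1 sB1 [cB1 sum1]] := IH _ _ hc hU' (B :\ y).
case: (boolP (y \in B)) => yB.
  exists (x |: B1).
    apply/subsetP => z; rewrite in_setU1 => /orP[/eqP->//|zB1].
    by move/subsetP: sB1 => /(_ z zB1); rewrite in_setD1 => /andP[].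
  split.
    rewrite cardsU1 (cardsD1 y B) yB; apply: leq_add => //; exact: leq_b1.
  have e1 : A :\: (x |: B1) = (A :\ x) :\: B1.
    by apply/setP => z; rewrite !inE; case: (z == x); rewrite ?andbF ?andbT //= andbC.
  have e2 : S :\: B = (S :\ y) :\: (B :\ y).
    apply/setP => z; rewrite !inE; case: (eqVneq z y) => [->|]; rewrite ?yB //=.
  by rewrite e1 e2.
exists B1.
  by apply: subset_trans sB1 _; apply: subD1set.
split.
  by apply: leq_trans cB1 _; rewrite (cardsD1 y B) (negbTE yB).
have xin : x \in A :\: B1.
  rewrite inE xA andbT; apply/negP => /(subsetP sB1); by rewrite !inE eqxx.
have yin : y \in S :\: B by rewrite inE yS yB.
rewrite (big_setD1 x xin) (big_setD1 y yin) lerD //.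
have e1 : (A :\: B1) :\ x = (A :\ x) :\: B1.
  by apply/setP => z; rewrite !inE andbCA.
have e2 : (S :\: B) :\ y = (S :\ y) :\: (B :\ y).
  apply/setP => z; rewrite !inE; case: (eqVneq z y) => //=.
by rewrite e1 e2.
Qed.


Variables (I : {set T} -> bool) (f : {set T} -> R).
Hypothesis (hM : is_matroid I) (hN : normalized f) (hMo : monotone f)
  (hS : submodular f) (hpos : forall x : T, 0 < f [set x]).

Let w := fun x => f [set x].
Let c := \big[Num.min/1]_(x : T) ((f setT - f (setT :\ x)) / f [set x]).

Lemma c_ge0 : 0 <= c.
Proof.
apply: (big_ind (fun v => 0 <= v)) => //.
  by move=> x y hx hy; rewrite le_min hx hy.
move=> x _; apply: divr_ge0; last exact: ltW.
rewrite subr_ge0; apply: hMo; exact: subsetT.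
Qed.

Lemma c_le x : c * w x <= f setT - f (setT :\ x).
Proof.
have hx : c <= (f setT - f (setT :\ x)) / f [set x].
  by rewrite /c (bigD1 x) //= ge_min lexx.
have := ler_wpM2r (ltW (hpos x)) hx.
by rewrite divfK // gt_eqF.
Qed.

Lemma L1 n (S : {set T}) : #|S| = n -> c * \sum_(x in S) w x <= f S.
Proof.
elim: n S => [|n IH] S hSn.
  by move/eqP: hSn; rewrite cards_eq0 => /eqP ->; rewrite big_set0 mulr0 hN.
have : (0 < #|S|)%N by rewrite hSn.
rewrite card_gt0 => /set0Pn [a aS].
have hc : #|S :\ a| = n by move: hSn; rewrite (cardsD1 a) aS add1n => -[].
rewrite (big_setD1 a aS) mulrDr.
have h1 := IH _ hc.
have h2 := c_le a.
have h3 := @hS (S :\ a) (setT :\ a) a.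
rewrite setD1K ?inE // setD1K // in h3.
have h4 : ~~ ((a != a) && true) by rewrite eqxx.
have := h3 (setSD _ (subsetT S)) h4.
lra.
Qed.

Lemma L2 n (S : {set T}) : #|S| = n -> f S <= \sum_(x in S) w x.
Proof.
elim: n S => [|n IH] S hSn.
  by move/eqP: hSn; rewrite cards_eq0 => /eqP ->; rewrite big_set0 hN.
have : (0 < #|S|)%N by rewrite hSn.
rewrite card_gt0 => /set0Pn [a aS].
have hc : #|S :\ a| = n by move: hSn; rewrite (cardsD1 a) aS add1n => -[].
rewrite (big_setD1 a aS).
have h1 := IH _ hc.
have h3 := @hS set0 (S :\ a) a.
rewrite setD1K // setU0 hN in h3.
have h4 : a \notin S :\ a by rewrite !inE eqxx.
have := h3 (sub0set _) h4.
move=> hh; move: h1 hh; rewrite /w /=; lra.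
Qed.


Lemma reach_inv A : myopic_reach I f A -> I A /\ forall t,
  (forall z, z \in A -> t <= w z) \/
  (forall x, x \notin A -> t <= w x -> ~~ I (x |: U w t A)).
Proof.
case: hM => I0 Idown Iexch.
elim=> [|{}A a _ [IA IH] _ aA Ia amax].
  by split => // t; left => z; rewrite inE.
split => // t; case: (IH t) => [Hs|Hm].
  case: (leP t (w a)) => hta.
    by left => z; rewrite in_setU1 => /orP[/eqP->//|]; apply: Hs.
  right => x xA tx; apply/negP => Ix.
  have sub : x |: A \subset x |: U w t (a |: A).
    apply: setUS; apply/subsetP => z zA; rewrite !inE zA orbT /=; exact: Hs.
  have Ix' := Idown _ _ sub Ix.
  have xA' : x \notin A by move: xA; rewrite in_setU1 negb_or => /andP[].
  have := amax x xA' Ix'; rewrite /w in hta tx; lra.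
have hta : w a < t.
  rewrite ltNge; apply/negP => hat.
  have := Hm a aA hat; apply/negP/negPn.
  apply: (Idown (a |: A)) => //; apply: setUS; apply/subsetP => z; rewrite inE => /andP[]//.
right => x xA tx; apply/negP => Ix.
have xA' : x \notin A by move: xA; rewrite in_setU1 negb_or => /andP[].
have := Hm x xA' tx; apply/negP/negPn.
apply: (Idown _ _ _ Ix); apply: setUS; apply/subsetP => z; rewrite !inE => /andP[-> ->].
by rewrite orbT.
Qed.

Lemma thresh Asol A : myopic_output I f Asol -> I A ->
  forall t, (#|U w t A| <= #|U w t Asol|)%N.
Proof.
move=> [hr hcard] IA t; have [IAs Hinv] := reach_inv Asol hr.
case: hM => I0 Idown Iexch.
case: (Hinv t) => [Hs|Hm].
  have sA : U w t A \subset A by apply/subsetP => z; rewrite inE => /andP[].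
  apply: leq_trans (subset_leq_card sA) _ .
  have hm : (#|A| <= mrank I)%N.
    by rewrite /mrank; apply: (@leq_bigmax_cond _ (fun B => I B) (fun B : {set T} => #|B|)).
  apply: leq_trans hm _.
  rewrite -leqNgt in hcard; apply: leq_trans hcard _.
  apply: subset_leq_card; apply/subsetP => z zA; rewrite inE zA; exact: Hs.
rewrite leqNgt; apply/negP => hlt.
have I1 : I (U w t Asol) by apply: (Idown Asol) => //; apply/subsetP => z; rewrite inE => /andP[].
have I2 : I (U w t A) by apply: (Idown A) => //; apply/subsetP => z; rewrite inE => /andP[].
have [x] := Iexch _ _ I1 I2 hlt.
rewrite !inE => /andP[hx /andP[xA tx]] Ix.
have xAs : x \notin Asol by apply/negP => xAs; move: hx; rewrite xAs tx.
by have := Hm x xAs tx; rewrite Ix.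
Qed.


Lemma resil_le alpha (A B : {set T}) : B \subset A -> (#|B| <= alpha)%N ->
  resil_value f alpha A <= f (A :\: B).
Proof.
by move=> sB cB; rewrite /resil_value (bigD1 B) /= ?sB ?cB // ge_min lexx.
Qed.

Lemma resil_ge alpha (A : {set T}) X :
  (forall B : {set T}, B \subset A -> (#|B| <= alpha)%N -> X <= f (A :\: B)) ->
  X <= resil_value f alpha A.
Proof.
move=> H; rewrite /resil_value.
apply: (big_ind (fun v => X <= v)).
- by have := H set0 (sub0set _); rewrite cards0 setD0; apply.
- by move=> x y hx hy; rewrite le_min hx hy.
- by move=> B /andP[]; apply: H.
Qed.

Lemma opt_att alpha : exists2 A : {set T}, I A & resil_opt I f alpha = resil_value f alpha A.
Proof.
case: hM => I0 _ _.
rewrite /resil_opt; apply: (big_ind (fun v => exists2 A : {set T}, I A & v = resil_value f alpha A)).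
- by exists set0.
- move=> x y [A IA ->] [B IB ->]; case: (leP (resil_value f alpha A) (resil_value f alpha B)) => h.
    by exists B => //; rewrite max_r.
  by exists A => //; rewrite max_l // ltW.
- by move=> A IA; exists A.
Qed.

Lemma main_sec alpha Asol : myopic_output I f Asol ->
  I Asol /\ c * resil_opt I f alpha <= resil_value f alpha Asol.
Proof.
move=> hout; have [IAs _] := reach_inv Asol (proj1 hout).
split => //.
have [A IA ->] := opt_att alpha.
apply: resil_ge => B sB cB.
have w0 : forall x, 0 <= w x by move=> x; exact: ltW (hpos x).
have [B' sB' [cB' hsum]] := counting w w0 _ A Asol (erefl _) (thresh Asol A hout IA) B.
have r1 := resil_le alpha A B' sB' (leq_trans cB' cB).
have r2 := L2 _ (A :\: B') (erefl _).
have r3 := L1 _ (Asol :\: B) (erefl _).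
have c0 := c_ge0.
apply: le_trans r3; apply: ler_wpM2l => //.
apply: le_trans hsum; apply: le_trans r2; exact: r1.
Qed.

End Helpers.

Theorem mainTheorem1 (T : finType) (R : realFieldType)
  (I : {set T} -> bool) (f : {set T} -> R) (alpha : nat) (Asol : {set T}) :
  is_matroid I ->
  normalized f -> monotone f -> submodular f ->
  (forall x : T, 0 < f [set x]) ->
  myopic_output I f Asol ->
  I Asol /\
  resil_value f alpha Asol >= (1 - curvature f) * resil_opt I f alpha.
Proof.
move=> hM hN hMo hS hpos hout.
have := @main_sec T R I f hM hN hMo hS hpos alpha Asol hout.
by rewrite /curvature opprB addrC subrK.
Qed.
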